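(* Let $S \subset \mathbb{R}^2$ be compact such that both $S$ and $S^\mathsf{c}$ satisfy the $r$-rolling condition, and let $\mathcal{X}_n=\{X_1,\ldots,X_n\}$ be independent and uniformly distributed on $S$. For any $\alpha>0$, there is a constant $A > 0$ depending only on $(\alpha,r,\operatorname{diam}(S))$ such that, for every $n\ge1$, with probability at least $1 - A e^{- n/A}$ there is no open ball of radius $\alpha$ with center in $S$ that contains no point of $\mathcal{X}_n$.
   Context: A set $T\subset\mathbb{R}^2$ satisfies the $r$-rolling condition ($r>0$) if for every $x \in \partial T$ there is an open ball $B$ of radius $r$ with $B \cap T = \emptyset$ and $x \in \partial B$. $S^\mathsf{c}=\mathbb{R}^2\setminus S$, $\operatorname{diam}(S)=\sup\{\|x-y\|:x,y\in S\}$. *)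

(* Defs.v *)
(* The plane R^2 is modelled as R * R (product
   topology = Euclidean topology, product sigma-algebra = Borel sets), with
   the Euclidean distance written out explicitly. *)
From HB Require Import structures.
From mathcomp Require Import all_boot all_order all_algebra.
From mathcomp Require Import all_classical all_reals all_analysis.
Set Implicit Arguments. Unset Strict Implicit. Unset Printing Implicit Defensive.
Import Order.TTheory GRing.Theory Num.Theory.
Import numFieldTopology.Exports numFieldNormedType.Exports.
Local Open Scope classical_set_scope.
Local Open Scope ring_scope.

Section Plane.
Variable R : realType.

Definition edist (x y : R * R) : R :=
  Num.sqrt ((x.1 - y.1) ^+ 2 + (x.2 - y.2) ^+ 2).

Definition oball (c : R * R) (rho : R) : set (R * R) :=
  [set y | edist c y < rho].

Definition bdry (T : set (R * R)) : set (R * R) :=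
  closure T `\` interior T.

Definition rolling (r : R) (T : set (R * R)) : Prop :=
  forall x, bdry T x ->
    exists c, oball c r `&` T = set0 /\ edist c x = r.

Definition diam (S : set (R * R)) : R :=
  sup [set edist x y | x in S & y in S].

Definition leb2 := ((@lebesgue_measure R) \x (@lebesgue_measure R))%E.

Definition uniform_on d (T : measurableType d) (P : probability T R)
    (X : T -> R * R) (S : set (R * R)) : Prop :=
  forall B : set (R * R), measurable B ->
    (P (X @^-1` B) * leb2 S = leb2 (B `&` S))%E.

Definition indep_pts d (T : measurableType d) (P : probability T R) n
    (X : 'I_n -> T -> R * R) : Prop :=
  forall B : 'I_n -> set (R * R), (forall i, measurable (B i)) ->
    P (\bigcap_(i in [set: 'I_n]) (X i @^-1` B i)) =
    (\prod_(i < n) P (X i @^-1` B i))%E.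

End Plane.

(* Main.v *)
Require Import Defs.
From HB Require Import structures.
From mathcomp Require Import all_boot all_order all_algebra.
From mathcomp Require Import all_classical all_reals all_analysis.
From mathcomp Require Import ring lra measurable_realfun.
Set Implicit Arguments. Unset Strict Implicit. Unset Printing Implicit Defensive.
Import Order.TTheory GRing.Theory Num.Theory.
Import numFieldTopology.Exports numFieldNormedType.Exports.
Local Open Scope classical_set_scope.
Local Open Scope ring_scope.
Section G.
Variable R : realType.
Implicit Types x y z : R * R.
Local Notation edist := (@Defs.edist R).
Lemma sqrlt (a b : R) : 0 <= b -> a ^+ 2 < b ^+ 2 -> a < b.
Proof. move=> b0 h; rewrite ltNge; apply/negP => ba. nra. Qed.
Lemma edist_ge0 x y : 0 <= edist x y. Proof. exact: sqrtr_ge0. Qed.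
Lemma edist_sqr x y : edist x y ^+ 2 = (x.1 - y.1) ^+ 2 + (x.2 - y.2) ^+ 2.
Proof. by rewrite /edist sqr_sqrtr // addr_ge0 // sqr_ge0. Qed.
Lemma edist_sym x y : edist x y = edist y x.
Proof. by rewrite /edist -(sqrrN (x.1 - y.1)) -(sqrrN (x.2 - y.2)) !opprB. Qed.
Lemma edist_tri x y z : edist x z <= edist x y + edist y z.
Proof.
have h1 := edist_sqr x y; have h2 := edist_sqr y z; have h3 := edist_sqr x z.
have g1 := edist_ge0 x y; have g2 := edist_ge0 y z; have g3 := edist_ge0 x z.
set a := edist x y in h1 g1 *; set b := edist y z in h2 g2 *; set c := edist x z in h3 g3 *.
set u1 := x.1 - y.1 in h1 h3 *; set u2 := x.2 - y.2 in h1 h3 *.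
have e1 : x.1 - z.1 = u1 + (y.1 - z.1) by rewrite /u1; ring.
have e2 : x.2 - z.2 = u2 + (y.2 - z.2) by rewrite /u2; ring.
rewrite e1 e2 in h3.
set v1 := y.1 - z.1 in h2 h3 *; set v2 := y.2 - z.2 in h2 h3 *.
have cs : (u1 * v1 + u2 * v2) ^+ 2 <= (a * b) ^+ 2.
  rewrite exprMn h1 h2 -subr_ge0.
  have -> : (u1 ^+ 2 + u2 ^+ 2) * (v1 ^+ 2 + v2 ^+ 2) - (u1 * v1 + u2 * v2) ^+ 2
     = (u1 * v2 - u2 * v1) ^+ 2 by ring.
  exact: sqr_ge0.
have ab0 : 0 <= a * b by exact: mulr_ge0.
have cs2 : u1 * v1 + u2 * v2 <= a * b.
  rewrite leNgt; apply/negP => hh; nra.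
rewrite -(ler_pXn2r (isT : (0 < 2)%N)) ?nnegrE//; last exact: addr_ge0.
rewrite h3; nra.
Qed.

Lemma sqr_inj (a b : R) : 0 <= a -> 0 <= b -> a ^+ 2 = b ^+ 2 -> a = b.
Proof. by move=> a0 b0 h; apply/eqP; rewrite -(eqrXn2 (isT : (0 < 2)%N)) // h. Qed.
Lemma edist_c1 x y : `|x.1 - y.1| <= edist x y.
Proof.
rewrite -(ler_pXn2r (isT : (0 < 2)%N)) ?nnegrE// ?edist_ge0//.
by rewrite edist_sqr real_normK ?num_real// lerDl sqr_ge0.
Qed.
Lemma edist_c2 x y : `|x.2 - y.2| <= edist x y.
Proof.
rewrite -(ler_pXn2r (isT : (0 < 2)%N)) ?nnegrE// ?edist_ge0//.
by rewrite edist_sqr (real_normK (num_real _)) lerDr sqr_ge0.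
Qed.
Lemma edist_box x y e : `|x.1 - y.1| < e -> `|x.2 - y.2| < e -> edist x y < 2 * e.
Proof.
move=> h1 h2; have e0 : 0 < e by apply: le_lt_trans h1.
apply: sqrlt; first by rewrite mulr_ge0 // ltW.
rewrite edist_sqr -(real_normK (num_real (x.1 - y.1))) -(real_normK (num_real (x.2 - y.2))).
have n1 := normr_ge0 (x.1 - y.1); have n2 := normr_ge0 (x.2 - y.2).
have q1 : `|x.1 - y.1| ^+ 2 < e ^+ 2 by rewrite ltr_pXn2r // nnegrE ltW.
have q2 : `|x.2 - y.2| ^+ 2 < e ^+ 2 by rewrite ltr_pXn2r // nnegrE ltW.
have -> : (2 * e) ^+ 2 = e ^+ 2 + e ^+ 2 + 2 * e ^+ 2 by ring.
have : 0 < 2 * e ^+ 2 by rewrite mulr_gt0 // exprn_gt0.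
lra.
Qed.
Lemma edist0 x : edist x x = 0.
Proof. by rewrite /edist !subrr expr0n /= addr0 sqrtr0. Qed.

Definition seg x y (t : R) : R * R := (x.1 + t * (y.1 - x.1), x.2 + t * (y.2 - x.2)).
Lemma seg0 x y : seg x y 0 = x. Proof. by rewrite /seg !mul0r !addr0; case: x. Qed.
Lemma seg1 x y : seg x y 1 = y. Proof. by rewrite /seg !mul1r !(addrC x.1, addrC x.2) !subrK; case: y. Qed.
Lemma edist_seg1 x y t : 0 <= t -> edist x (seg x y t) = t * edist x y.
Proof.
move=> t0; apply: sqr_inj; [exact: edist_ge0|exact: mulr_ge0 t0 (edist_ge0 _ _)|].
rewrite exprMn !edist_sqr /seg /=; ring.
Qed.
Lemma edist_seg2 x y t : t <= 1 -> edist (seg x y t) y = (1 - t) * edist x y.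
Proof.
move=> t1; apply: sqr_inj; [exact: edist_ge0| |].
  by apply: mulr_ge0; [rewrite subr_ge0|exact: edist_ge0].
rewrite exprMn !edist_sqr /seg /=; ring.
Qed.

Lemma segd1 x y t u : `|(seg x y t).1 - (seg x y u).1| <= `|t - u| * edist x y.
Proof.
have -> : (seg x y t).1 - (seg x y u).1 = (t - u) * (y.1 - x.1) by rewrite /seg /=; ring.
rewrite normrM ler_wpM2l // edist_sym; exact: edist_c1.
Qed.
Lemma segd2 x y t u : `|(seg x y t).2 - (seg x y u).2| <= `|t - u| * edist x y.
Proof.
have -> : (seg x y t).2 - (seg x y u).2 = (t - u) * (y.2 - x.2) by rewrite /seg /=; ring.
rewrite normrM ler_wpM2l // edist_sym; exact: edist_c2.
Qed.

Lemma nbhsE2 (x : R * R) (A : set (R*R)) : nbhs x A <->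
  exists2 e, 0 < e & forall y, `|x.1 - y.1| < e -> `|x.2 - y.2| < e -> A y.
Proof.
rewrite nbhs_ballP; split => [[e e0 H]|[e e0 H]]; exists e => //.
  by move=> y h1 h2; apply: H.
by move=> y [h1 h2]; apply: H.
Qed.

Lemma stepA (S : set (R * R)) (r rho : R) s : 0 < r -> 0 < rho ->
  rolling r (~` S) -> S s ->
  exists m, forall z, ball m (Num.min (rho / 4) r / 2) z -> S z /\ edist s z < rho.
Proof.
move=> r0 rho0 roll Ss.
set d := Num.min (rho / 4) r.
have d0 : 0 < d by rewrite lt_min r0 andbT divr_gt0.
have dr : d <= r by rewrite ge_min lexx orbT.
have drho : d <= rho / 4 by rewrite ge_min lexx.
have balld m z : ball m (d / 2) z -> edist m z < d.
  by move=> [h1 h2]; have := edist_box h1 h2; rewrite mulrC divfK.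
case: (pselect (forall y, edist s y < rho / 2 -> S y)) => [H|].
  exists s => z /balld bz; split; last by lra.
  by apply: H; lra.
move=> /existsNP [y /not_implyP [ys ny]].
have sy0 := edist_ge0 s y.
pose A := [set t : R | 0 <= t <= 1 /\ S (seg s y t)].
have hA : has_sup A.
  split; first by exists 0; split; [rewrite lexx ler01|rewrite seg0].
  by exists 1 => t [/andP[_ ->]].
set ts := sup A.
have ts0 : 0 <= ts by apply: sup_upper_bound => //; split; [rewrite lexx ler01|rewrite seg0].
have ts1 : ts <= 1 by apply: ge_sup; [case: hA|move=> t [/andP[_ ->]]].
set x := seg s y ts.
have key t : `|x.1 - (seg s y t).1| <= `|ts - t| * (rho / 2) /\ `|x.2 - (seg s y t).2| <= `|ts - t| * (rho / 2).
  split; [apply: le_trans (segd1 _ _ _ _) _|apply: le_trans (segd2 _ _ _ _) _];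
  by apply: ler_wpM2l => //; apply: ltW.
have bx : bdry (~` S) x.
  split.
    move=> B /nbhsE2 [e e0 HB].
    have [ts_eq1|ts_lt1] := eqVneq ts 1.
      exists y; split => //; apply: HB; rewrite /x ts_eq1 seg1 subrr normr0 //.
    have tslt : ts < 1 by rewrite lt_neqAle ts_lt1 ts1.
    have er0 : 0 < e / rho by rewrite divr_gt0.
    set t := ts + Num.min (1 - ts) (e / rho).
    have m0 : 0 < Num.min (1 - ts) (e / rho) by rewrite lt_min subr_gt0 tslt er0.
    have m1 : Num.min (1 - ts) (e / rho) <= 1 - ts by rewrite ge_min lexx.
    have m2 : Num.min (1 - ts) (e / rho) <= e / rho by rewrite ge_min lexx orbT.
    exists (seg s y t); split.
      move=> St; have : t <= ts by apply: sup_upper_bound => //; split => //; apply/andP; split; rewrite /t; lra.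
      rewrite /t; lra.
    have hd : `|ts - t| * (rho / 2) < e.
      rewrite /t opprD addrA subrr add0r normrN gtr0_norm //.
      have : Num.min (1 - ts) (e / rho) * rho <= e / rho * rho by rewrite ler_wpM2r // ltW.
      rewrite divfK ?gt_eqF //; nra.
    have [k1 k2] := key t.
    by apply: HB; apply: le_lt_trans hd.
  move=> /nbhsE2 [e e0 HB].
  have er0 : 0 < e / rho by rewrite divr_gt0.
  have [t [/andP[t0 t1] St] tgt] := sup_adherent er0 hA.
  have tle : t <= ts by apply: sup_upper_bound => //; split => //; apply/andP.
  have hd : `|ts - t| * (rho / 2) < e.
    rewrite ger0_norm ?subr_ge0 //.
    have : (ts - t) * rho < e / rho * rho by rewrite ltr_pM2r //; move: tgt; rewrite !ltrBlDr addrC.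
    rewrite divfK ?gt_eqF // mulrA => h.
    have : 0 <= (ts - t) * rho by rewrite mulr_ge0 ?subr_ge0 // ltW.
    lra.
  have [k1 k2] := key t.
  by apply: (HB (seg s y t)) => //; apply: le_lt_trans hd.
have [c [hc1 hc2]] := roll x bx.
have inS z : edist c z < r -> S z.
  move=> hz; apply: contrapT => nz.
  by have : (oball c r `&` ~` S) z by []; rewrite hc1.
have sx : edist s x < rho / 2.
  rewrite /x edist_seg1 //; apply: le_lt_trans ys.
  by rewrite ler_piMl.
have xc : edist x c = r by rewrite edist_sym.
exists (seg x c (d / r)) => z /balld bz.
have dr1 : d / r <= 1 by rewrite ler_pdivrMr // mul1r.
have dr0 : 0 <= d / r by rewrite divr_ge0 // ltW.
have e1 : edist c (seg x c (d / r)) = r - d.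
  by rewrite edist_sym edist_seg2 // xc mulrBl mul1r divfK ?gt_eqF.
have e2 : edist x (seg x c (d / r)) = d.
  by rewrite edist_seg1 // xc divfK ?gt_eqF.
split.
  apply: inS; apply: le_lt_trans (edist_tri _ (seg x c (d / r)) _) _; lra.
have := edist_tri s x z; have := edist_tri x (seg x c (d / r)) z; lra.
Qed.

Lemma open_lt c (b : R) : open [set z | edist c z < b].
Proof.
rewrite openE => z /= hz; rewrite /interior nbhsE2.
exists ((b - edist c z) / 2); first by rewrite divr_gt0 // subr_gt0.
move=> y h1 h2; have := edist_box h1 h2; have := edist_tri c z y.
rewrite /=; lra.
Qed.

Lemma compact_incr (S : set (R * R)) (f : nat -> set (R * R)) : compact S ->
  (forall k, open (f k)) -> (forall k l, (k <= l)%N -> f k `<=` f l) ->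
  S `<=` \bigcup_k f k -> exists K, S `<=` f K.
Proof.
move=> cS0 of_ mono Sf.
have cS : cover_compact S.
  by have h := @compact_cover ((R * R)%type : normedModType R); rewrite -h.
have [D' _ HD] := cS nat setT f (fun i _ => of_ i) Sf.
exists (\max_(i <- finmap.enum_fset D') i) => z /HD [i /= iD fi].
apply: mono fi; exact: leq_bigmax_seq.
Qed.

Lemma diam_ub S x y : compact S -> S x -> S y -> edist x y <= diam S.
Proof.
move=> cS Sx Sy; apply: sup_upper_bound; last by exists x => //; exists y.
split; first by exists (edist x x); exists x => //; exists x.
have [K HK] : exists K, S `<=` [set z | edist x z < K%:R].
  apply: compact_incr => //.
  - move=> k; exact: open_lt.
  - by move=> k l kl z /= h; apply: lt_le_trans h _; rewrite ler_nat.
  - move=> z _; exists (Num.truncn (edist x z)).+1 => //=.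
    by have /andP[] := truncn_itv (edist_ge0 x z).
exists (K%:R + K%:R) => _ [a Sa [b Sb <-]].
have := HK _ Sa; have := HK _ Sb; have := edist_tri a x b; rewrite /= (edist_sym a x); lra.
Qed.

Lemma approx (a e : R) : 0 < e -> exists q : rat, `|a - ratr q| < e.
Proof.
move=> e0; have : a - e < a + e by lra.
move=> /rat_in_itvoo [q]; rewrite in_itv /= => /andP[h1 h2]; exists q.
by rewrite ltr_norml; apply/andP; split; lra.
Qed.

Lemma ballX (m : R * R) e : ball m e = ball m.1 e `*` ball m.2 e.
Proof. by apply/seteqP; split => z []. Qed.

Lemma measurable_ball2 (m : R * R) e : measurable (ball m e).
Proof. by rewrite ballX; apply: measurableX; apply: measurable_realfun.measurable_ball. Qed.

Definition qr (q : rat * rat) : R * R := (ratr q.1, ratr q.2).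
Definition eps (k : nat) : R := (k.+1%:R)^-1.
Lemma eps_gt0 k : 0 < eps k. Proof. by rewrite /eps invr_gt0. Qed.
Lemma eps_small e : 0 < e -> exists k, eps k < e.
Proof.
move=> e0; have ei : 0 < e^-1 by rewrite invr_gt0.
exists (Num.truncn (e^-1)).
have h : e^-1 < (Num.truncn (e^-1)).+1%:R by have /andP[] := truncn_itv (ltW ei).
rewrite /eps -[X in _ < X]invrK ltf_pV2 //; rewrite posrE ?ltr0n //.
Qed.

Lemma qapprox (z : R * R) e : 0 < e -> exists q, `|z.1 - (qr q).1| < e /\ `|z.2 - (qr q).2| < e.
Proof.
move=> e0; have [q1 h1] := approx z.1 e0; have [q2 h2] := approx z.2 e0.
by exists (q1, q2).
Qed.

Lemma nbhs_open_in (A : set (R * R)) z : open A -> A z -> nbhs z A.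
Proof. by rewrite openE => oA Az; exact: oA. Qed.

Lemma closed_meas2 (S : set (R * R)) : closed S -> measurable S.
Proof.
move=> cS.
have -> : S = \bigcap_k \bigcup_(q : rat * rat)
   (if `[< exists s, S s /\ edist (qr q) s < eps k >] then ball (qr q) (eps k) else set0).
  apply/seteqP; split.
  - move=> z Sz k _.
    have e2 : 0 < eps k / 2 by rewrite divr_gt0 ?eps_gt0.
    have [q [h1 h2]] := qapprox z e2.
    exists q => //.
    have ex : exists s, S s /\ edist (qr q) s < eps k.
      exists z; split => //; rewrite edist_sym.
      by have := edist_box h1 h2; rewrite mulrC divfK.
    rewrite asboolT //; have ek := eps_gt0 k; split => /=; rewrite /ball /= distrC; move: h1 h2 => /= h1 h2; lra.

  - move=> z hz; apply: contrapT => nz.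
    have /nbhsE2 [e e0 HB] := nbhs_open_in (closed_openC cS) nz.
    have e3 : 0 < e / 3 by rewrite divr_gt0.
    have [k hk] := eps_small e3.
    have [q _] := hz k I.
    case: asboolP => [[s [Ss hs]] [h1 h2]|//].
    have := edist_box h1 h2 => hq.
    have hzs : edist z s < e by have := edist_tri z (qr q) s; rewrite (edist_sym z (qr q)); lra.
    apply: (HB s); [exact: le_lt_trans (edist_c1 _ _) hzs|exact: le_lt_trans (edist_c2 _ _) hzs|exact: Ss].
apply: bigcapT_measurable => k.
apply: countable_bigcupT_measurable; first exact: countableP.
move=> q; case: asboolP => _; [exact: measurable_ball2|exact: measurable0].
Qed.

Lemma meas_edist d (T : measurableType d) (p : R * R) (f : T -> R * R) :
  measurable_fun setT f -> measurable_fun setT (fun w => edist p (f w)).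
Proof.
move=> mf; rewrite /Defs.edist.
apply: (@measurableT_comp _ _ _ _ _ _ (@Num.sqrt R)).
  exact: measurable_realfun.continuous_measurable_fun (@sqrt_continuous R).
apply: measurable_funD; apply: measurable_funX; apply: measurable_funB;
  (try exact: measurable_cst).
  exact: measurableT_comp measurable_fst mf.
exact: measurableT_comp measurable_snd mf.
Qed.

Lemma meas_far d (T : measurableType d) n (X : 'I_n -> T -> R * R) p (b : R) :
  (forall i, measurable_fun setT (X i)) ->
  measurable [set w | forall i, b < edist p (X i w)].
Proof.
move=> mX.
have -> : [set w | forall i, b < edist p (X i w)] =
  \bigcap_(i in setT) ((fun w => edist p (X i w)) @^-1` `]b, +oo[%classic).
  apply/seteqP; split => [w h i _|w h i]; first by rewrite /= in_itv /= andbT; apply: h.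
  by have := h i I; rewrite /= in_itv /= andbT.
apply: fin_bigcap_measurable; first exact: finite_finset.
move=> i _; rewrite -[X in measurable X]setTI.
by apply: (meas_edist p (mX i)) => //; exact: measurable_itv.
Qed.

Lemma eps_mono k l : (k <= l)%N -> eps l <= eps k.
Proof. by move=> kl; rewrite /eps lef_pV2 ?posrE ?ltr0n // ler_nat. Qed.

Lemma measE d (T : measurableType d) n (X : 'I_n -> T -> R * R) (S : set (R * R)) alpha :
  compact S -> (forall i, measurable_fun setT (X i)) ->
  measurable [set w : T | ~ (exists c, S c /\ forall i, ~ oball c alpha (X i w))].
Proof.
move=> cS mX.
set Ec := [set w | exists c, S c /\ forall i, ~ oball c alpha (X i w)].
have -> : [set w : T | ~ (exists c, S c /\ forall i, ~ oball c alpha (X i w))] = ~` Ec by [].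
apply: measurableC.
have -> : Ec = \bigcap_k \bigcup_(q : rat * rat)
   (if `[< exists s, S s /\ edist (qr q) s < eps k >]
    then [set w | forall i, alpha - 2 * eps k < edist (qr q) (X i w)] else set0).
  apply/seteqP; split.
  - move=> w [c [Sc hc]] k _.
    have e2 : 0 < eps k / 2 by rewrite divr_gt0 ?eps_gt0.
    have [q [h1 h2]] := qapprox c e2.
    exists q => //.
    have hqc : edist (qr q) c < eps k.
      by rewrite edist_sym; have := edist_box h1 h2; rewrite mulrC divfK.
    rewrite asboolT; last by exists c.
    move=> i /=; have hi : alpha <= edist c (X i w).
      by rewrite leNgt; apply/negP => h; apply: (hc i).
    have := edist_tri c (qr q) (X i w); rewrite (edist_sym c (qr q)).
    have := eps_gt0 k; lra.
  - move=> w hw; apply: contrapT => nE.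
    have hall c : S c -> exists i, edist (X i w) c < alpha.
      move=> Sc; apply: contrapT => h; apply: nE; exists c; split => // i hi.
      by apply: h; exists i; rewrite edist_sym.
    have [K HK] : exists K, S `<=`
        \bigcup_(i in setT) [set z | edist (X i w) z < alpha - 3 * eps K].
      apply: (@compact_incr S
        (fun k => \bigcup_(i in setT) [set z | edist (X i w) z < alpha - 3 * eps k])) => //.
    + by move=> k; apply: bigcup_open => i _; exact: open_lt.
    + move=> k l kl z [i _ hz]; exists i => //; apply: lt_le_trans hz _.
      by have := eps_mono kl; rewrite /=; lra.
    + move=> z Sz; have [i hi] := hall z Sz.
      have h3 : 0 < (alpha - edist (X i w) z) / 3 by rewrite divr_gt0 // subr_gt0.
      have [k hk] := eps_small h3.
      by exists k => //; exists i => //=; lra.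
    have [q _] := hw K I.
    case: asboolP => [[s [Ss hs]] hq|//].
    have [i _ hi] := HK s Ss.
    have := hq i; have := edist_tri (qr q) s (X i w); rewrite (edist_sym s (X i w)).
    move=> t1 t2; have t3 := eps_gt0 K; move: hi => /= hi; lra.
apply: bigcapT_measurable => k.
apply: countable_bigcupT_measurable; first exact: countableP.
by move=> q; case: asboolP => _; [exact: meas_far|exact: measurable0].
Qed.

Lemma trunc_close (u v : R) : 0 <= u -> 0 <= v -> Num.truncn u = Num.truncn v -> `|u - v| < 1.
Proof.
move=> u0 v0 e; have /andP[u1 u2] := truncn_itv u0; have /andP[v1 v2] := truncn_itv v0.
rewrite e in u1 u2; rewrite -natr1 in u2 v2.
by rewrite ltr_norml; apply/andP; split; lra.
Qed.

Lemma trunc_lt (u B : R) : 0 <= u -> u <= B -> (Num.truncn u < (Num.truncn B).+1)%N.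
Proof.
move=> u0 uB; rewrite truncn_lt_nat //.
have /andP[_ h] := truncn_itv (le_trans u0 uB); lra.
Qed.

Lemma idx_inj (N a b a' b' : nat) : (b < N)%N -> (b' < N)%N ->
  (a * N + b = a' * N + b')%N -> a = a' /\ b = b'.
Proof.
move=> bN bN' e.
have hb : b = b' by have := congr1 (modn^~ N) e; rewrite !modnMDl !modn_small.
by split => //; subst b'; move/eqP: e; rewrite eqn_add2r eqn_mul2r; case/orP => [/eqP N0|/eqP//]; rewrite N0 in bN.
Qed.

Lemma leb2_ball (m : R * R) e : 0 <= e -> @leb2 R (ball m e) = ((e *+ 2) * (e *+ 2))%:E.
Proof.
move=> e0; rewrite ballX /leb2 product_measure1E; try exact: measurable_realfun.measurable_ball.
by rewrite EFinM; congr (_ * _)%E; exact: lebesgue_measure_ball.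
Qed.
End G.

Local Notation edist := (@Defs.edist _).
Unset Implicit Arguments.
Set Strict Implicit.
Theorem proposition1 (R : realType) (alpha r D : R) :
  0 < alpha -> 0 < r ->
  exists A : R, 0 < A /\
    forall S : set (R * R),
      compact S -> S !=set0 ->
      rolling r S -> rolling r (~` S) -> diam S = D ->
      forall n : nat, (0 < n)%N ->
      forall (d : measure_display) (T : measurableType d)
             (P : probability T R) (X : 'I_n -> T -> R * R),
        (forall i, measurable_fun setT (X i)) ->
        indep_pts P X ->
        (forall i, uniform_on P (X i) S) ->
        let E := [set w : T | ~ (exists c, S c /\
                     forall i, ~ oball c alpha (X i w))] in
        measurable E /\
        ((1 - A * expR (- (n%:R) / A))%:E <= P E)%E.
Proof.
move=> a0 r0.
pose h := alpha / 4.
have h0 : 0 < h by rewrite divr_gt0.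
pose N := (Num.truncn (`|D| *+ 2 / h)).+1.
pose M := (N * N)%N.
pose eta := Num.min (alpha / 2 / 4) r / 2.
have eta0 : 0 < eta by rewrite divr_gt0 // lt_min r0 andbT !divr_gt0.
pose L := (`|D| + 1) *+ 2.
have L0 : 0 < L by rewrite pmulrn_lgt0 // ltr_wpDl.
pose g := eta *+ 2 * (eta *+ 2).
have g0 : 0 < g by rewrite mulr_gt0 // pmulrn_lgt0.
pose p := g / (L * L).
have p0 : 0 < p by rewrite divr_gt0 // mulr_gt0.
exists (M%:R + p^-1); split; first by rewrite ltr_wpDl // invr_gt0.
move=> S cS [s0 Ss0] rollS rollSc hD n n0 d T P X mX indep unif E.
have closedS : closed S := compact_closed (@norm_hausdorff _ ((R * R)%type : normedModType R)) cS.
have mS := closed_meas2 closedS.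
have hdist x y : S x -> S y -> edist x y <= D by move=> Sx Sy; rewrite -hD; exact: diam_ub.
have D0 : 0 <= D by have := hdist s0 s0 Ss0 Ss0; rewrite edist0.
have aD : `|D| = D by rewrite ger0_norm.
pose a (c : R * R) := Num.truncn ((c.1 - s0.1 + D) / h).
pose b (c : R * R) := Num.truncn ((c.2 - s0.2 + D) / h).
pose idx c := (a c * N + b c)%N.
have hu1 c : S c -> 0 <= (c.1 - s0.1 + D) / h /\ (c.1 - s0.1 + D) / h <= `|D| *+ 2 / h.
  move=> Sc; have := le_trans (edist_c1 c s0) (hdist _ _ Sc Ss0).
  rewrite ler_norml aD => /andP[l1 u1].
  split; first by apply: divr_ge0; [lra|exact: ltW].
  by rewrite ler_pM2r ?invr_gt0 // mulr2n; lra.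
have hu2 c : S c -> 0 <= (c.2 - s0.2 + D) / h /\ (c.2 - s0.2 + D) / h <= `|D| *+ 2 / h.
  move=> Sc; have := le_trans (edist_c2 c s0) (hdist _ _ Sc Ss0).
  rewrite ler_norml aD => /andP[l1 u1].
  split; first by apply: divr_ge0; [lra|exact: ltW].
  by rewrite ler_pM2r ?invr_gt0 // mulr2n; lra.
have hab c : S c -> (a c < N)%N /\ (b c < N)%N.
  move=> Sc; have [x1 x2] := hu1 c Sc; have [y1 y2] := hu2 c Sc.
  by split; apply: trunc_lt.
have same c s : S c -> S s -> idx c = idx s -> edist c s < alpha / 2.
  move=> Sc Ss e; have [ac bc] := hab c Sc; have [as_ bs] := hab s Ss.
  have [ea eb] := idx_inj bc bs e.
  have t1 := trunc_close (hu1 c Sc).1 (hu1 s Ss).1 ea.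
  have t2 := trunc_close (hu2 c Sc).1 (hu2 s Ss).1 eb.
  have k1 : `|c.1 - s.1| < h.
    move: t1; have -> : (c.1 - s0.1 + D) / h - (s.1 - s0.1 + D) / h = (c.1 - s.1) / h by ring.
    by rewrite normrM normfV (gtr0_norm h0) ltr_pdivrMr // mul1r.
  have k2 : `|c.2 - s.2| < h.
    move: t2; have -> : (c.2 - s0.2 + D) / h - (s.2 - s0.2 + D) / h = (c.2 - s.2) / h by ring.
    by rewrite normrM normfV (gtr0_norm h0) ltr_pdivrMr // mul1r.
  have := edist_box k1 k2; rewrite /h; lra.
have hm k : exists m, forall c, S c -> idx c = k -> forall z, ball m eta z -> S z /\ edist c z < alpha.
  case: (pselect (exists s, S s /\ idx s = k)) => [[s [Ss hs]]|nex]; last first.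
    by exists s0 => c Sc hc; exfalso; apply: nex; exists c.
  have a2 : 0 < alpha / 2 by rewrite divr_gt0.
  have [m hm] := stepA r0 a2 rollSc Ss.
  exists m => c Sc hc z hz; have [Sz hz'] := hm z hz; split => //.
  have := same c s Sc Ss (etrans hc (esym hs)); have := edist_tri c s z; lra.
have [mk hmk] := choice hm.
pose G k := ball (mk k) eta.
have mG k : measurable (G k) by exact: measurable_ball2.
have mpre i B : measurable B -> measurable (X i @^-1` B).
  by move=> mB; rewrite -[X in measurable X]setTI; exact: mX.
pose F k := if `[< exists c, S c /\ idx c = k >]
  then \bigcap_(i in setT) (X i @^-1` (~` G k)) else set0.
have mF k : measurable (F k).
  rewrite /F; case: asboolP => _; last exact: measurable0.
  by apply: fin_bigcap_measurable; [exact: finite_finset|move=> i _; apply: mpre; apply: measurableC].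
have mE : measurable E by exact: measE.
split => //.
have Ec_sub : ~` E `<=` \big[setU/set0]_(k < M) F k.
  move=> w /= nEw; have [c [Sc hc]] := contrapT nEw.
  rewrite -bigcup_mkord; exists (idx c).
    have [ac bc] := hab c Sc.
    rewrite /= /idx /M (@leq_trans (a c * N + N)) // ?ltn_add2l //.
    by rewrite -mulSnr leq_mul2r ac orbT.
  rewrite /F asboolT; last by exists c.
  move=> i _ /= hG; apply: (hc i); rewrite /oball /=.
  exact: (hmk (idx c) c Sc erefl (X i w) hG).2.
have SB : S `<=` ball s0 (D + 1).
  move=> z Sz; have hz := hdist _ _ Ss0 Sz.
  split => /=; rewrite /ball /=.
    by apply: le_lt_trans (edist_c1 s0 z) _; lra.
  by apply: le_lt_trans (edist_c2 s0 z) _; lra.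
have lS : (@leb2 R S <= (L * L)%:E)%E.
  rewrite /L aD -(leb2_ball s0); last by lra.
  by apply: le_measure => //; rewrite inE //; exact: measurable_ball2.
have fS : @leb2 R S \is a fin_num.
  by rewrite ge0_fin_numE ?measure_ge0 //; apply: le_lt_trans lS _; exact: ltry.
set l := fine (@leb2 R S).
have lE : @leb2 R S = l%:E by rewrite fineK.
have hPF k : (P (F k) <= (expR (- p * n%:R))%:E)%E.
  rewrite /F; case: asboolP => [[c [Sc hc]]|_]; last by rewrite measure0 lee_fin expR_ge0.
  have GS : G k `<=` S by move=> z hz; exact: (hmk k c Sc hc z hz).1.
  have lG : @leb2 R (G k) = g%:E by rewrite leb2_ball // ltW.
  have lSG : (g%:E <= @leb2 R S)%E.
    by rewrite -lG; apply: le_measure; rewrite ?inE //; exact: mG.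
  have lpos : 0 < l by rewrite lE lee_fin in lSG; lra.
  have lL : l <= L * L by rewrite lE lee_fin in lS.
  have pi i : p <= fine (P (X i @^-1` G k)) <= 1.
    have finP : P (X i @^-1` G k) \is a fin_num by apply: fin_num_measure; exact: mpre.
    have u := unif i (G k) (mG k); rewrite setIidl // lG lE -(fineK finP) -EFinM in u.
    have {}u := EFin_inj u.
    have x0 : 0 <= fine (P (X i @^-1` G k)) by rewrite fine_ge0 // measure_ge0.
    have x1 : fine (P (X i @^-1` G k)) <= 1.
      by rewrite -lee_fin fineK //; apply: probability_le1; exact: mpre.
    rewrite x1 andbT /p ler_pdivrMr ?mulr_gt0 // -u.
    by apply: ler_wpM2l.
  have hi i : P (X i @^-1` (~` G k)) = (1 - fine (P (X i @^-1` G k)))%:E.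
    have finP : P (X i @^-1` G k) \is a fin_num by apply: fin_num_measure; exact: mpre.
    rewrite -preimage_setC probability_setC; last exact: mpre.
    by rewrite -[X in (1 - X)%E](fineK finP) EFinB.
  rewrite (indep (fun _ => ~` G k)); last by move=> i; apply: measurableC.
  rewrite (eq_bigr _ (fun i _ => hi i)) prodEFin lee_fin.
  have p1 : p <= 1 by have /andP[q1 q2] := pi (Ordinal n0); lra.
  apply: le_trans (_ : \prod_(i < n) (1 - p) <= _).
    apply: ler_prod => i _; have /andP[q1 q2] := pi i; apply/andP; split; lra.
  rewrite prodr_const card_ord mulrC expRM_natl.
  apply: lerXn2r; rewrite ?nnegrE ?expR_ge0 ?subr_ge0 //.
  by have := expR_ge1Dx (- p); lra.
have hPEc : (P (~` E) <= (M%:R * expR (- p * n%:R))%:E)%E.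
  apply: le_trans (@content_subadditive _ _ _ P _ _ _ (fun k _ => mF k) (measurableC mE) Ec_sub) _.
  apply: le_trans (_ : (\sum_(k < M) (expR (- p * n%:R))%:E <= _)%E).
    by apply: lee_sum => k _; exact: hPF.
  by rewrite sumEFin lee_fin sumr_const card_ord mulr_natl.
rewrite -[E]setCK probability_setC; last exact: measurableC.
have fin : P (~` E) \is a fin_num by apply: fin_num_measure; exact: measurableC.
rewrite -(fineK fin) in hPEc *; rewrite lee_fin in hPEc.
rewrite -EFinB lee_fin.
set x := fine (P (~` E)) in hPEc *.
set A := M%:R + p^-1.
have A0 : 0 < A by rewrite ltr_wpDl // invr_gt0.
have MA : M%:R <= A by rewrite lerDl invr_ge0 ltW.
have Ap : A^-1 <= p by rewrite -[p]invrK lef_pV2 ?posrE ?invr_gt0 // lerDr.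
have ee : expR (- p * n%:R) <= expR (- n%:R / A).
  by rewrite ler_expR !mulNr lerN2 [p * _]mulrC; apply: ler_wpM2l.
have : M%:R * expR (- p * n%:R) <= A * expR (- n%:R / A).
  apply: le_trans (ler_wpM2l (ltW A0) ee); apply: ler_wpM2r => //; exact: expR_ge0.
lra.
Qed.
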